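(* Let $\bar{\mathcal{A}}=(\bar A_1,\dots,\bar A_4)$ be a quadruple of $5\times5$ alternating complex matrices, and suppose the scheme $\bar C\subset\mathbb{P}^3$ cut out by the five $4\times4$ principal sub-Pfaffians of $\bar{\mathcal{A}}(\mathbf{x})=\sum_k\bar A_kx_k$ has a positive-dimensional Zariski tangent space at some point $\bar p$. Then there exist $\bar\gamma\in U_4(\mathbb{C})\times U_5(\mathbb{C})$, an integer $1\le K\le4$ and distinct integers $1\le I,J,L\le5$ such that $\bar{\mathcal{B}}=\bar\gamma(\bar{\mathcal{A}})$ satisfies either (A) $\bar B_K=0$; or (B) $\bar B_k\neq0$ for all $k$, the entries $\bar b^{(K)}_{iI},\bar b^{(K)}_{iJ},\bar b^{(K)}_{iL}$ vanish for all $1\le i\le5$, and either (i) $\bar{\mathcal{B}}(\mathbf{x})_{IL}=\bar{\mathcal{B}}(\mathbf{x})_{JL}=0$, or (ii) $\bar{\mathcal{B}}(\mathbf{x})_{IJ}=0$ and the linear forms $\bar{\mathcal{B}}(\mathbf{x})_{IL}$ and $\bar{\mathcal{B}}(\mathbf{x})_{JL}$ are linearly independent.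
   Context: $U_n\subset\mathrm{GL}_n$ is the subgroup of lower triangular unipotent matrices. A pair $(g_4,g_5)\in U_4(\mathbb{C})\times U_5(\mathbb{C})$ acts on quadruples of alternating matrices by $(A_1,\dots,A_4)^t\mapsto g_4(A_1,\dots,A_4)^t$ (i.e. $A_k\mapsto\sum_l(g_4)_{kl}A_l$) and $A_k\mapsto g_5A_kg_5^t$. For a quadruple $\mathcal{B}=(B_1,\dots,B_4)$, $b^{(k)}_{ij}$ denotes the $(i,j)$ entry of $B_k$, and $\mathcal{B}(\mathbf{x})_{ij}=\sum_kb^{(k)}_{ij}x_k$ is the linear form in the $(i,j)$ entry of $\mathcal{B}(\mathbf{x})=\sum_kB_kx_k$. *)

(* Defs.v *)
From HB Require Import structures.
From mathcomp Require Import all_boot all_order all_algebra.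
From mathcomp Require Import complex.
From mathcomp Require Import reals.
From mathcomp Require Import mpoly.
Set Implicit Arguments. Unset Strict Implicit. Unset Printing Implicit Defensive.
Import Order.TTheory GRing.Theory Num.Theory.
Local Open Scope ring_scope.

Definition quad (F : Type) := 'I_4 -> 'M[F]_5.

Definition alternating (F : nzRingType) (M : 'M[F]_5) :=
  (forall i, M i i = 0) /\ M^T = - M.

(* lower triangular unipotent matrices U_n *)
Definition unipotent_lower (F : nzRingType) (n : nat) (g : 'M[F]_n) :=
  (forall i j : 'I_n, (i < j)%N -> g i j = 0) /\ (forall i : 'I_n, g i i = 1).

Definition act (F : comNzRingType) (g4 : 'M[F]_4) (g5 : 'M[F]_5) (A : quad F) : quad F :=
  fun k => g5 *m (\sum_l g4 k l *: A l) *m g5^T.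

Definition linform (F : comNzRingType) (A : quad F) (i j : 'I_5) : {mpoly F[4]} :=
  \sum_k (A k i j) *: 'X_k.

Definition pf4 (F : comNzRingType) (A : quad F) (a b c d : 'I_5) : {mpoly F[4]} :=
  linform A a b * linform A c d - linform A a c * linform A b d
  + linform A a d * linform A b c.

Definition subpf (F : comNzRingType) (A : quad F) (i : 'I_5) : {mpoly F[4]} :=
  pf4 A (lift i (0 : 'I_4)) (lift i (1 : 'I_4)) (lift i (2 : 'I_4)) (lift i (3 : 'I_4)).

Definition jac (F : comNzRingType) (A : quad F) (p : 'I_4 -> F) : 'M[F]_(5, 4) :=
  \matrix_(i < 5, k < 4) (mderiv k (subpf A i)).@[p].

(* p (a nonzero vector, representing a point of P^3) lies on the scheme C *)
Definition on_scheme (F : comNzRingType) (A : quad F) (p : 'I_4 -> F) :=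
  (exists k, p k != 0) /\ (forall i, (subpf A i).@[p] = 0).

(* dimension of the Zariski tangent space of the projective scheme at [p]:
   dim ker J(p) - 1, the affine-cone tangent space modulo the line through p *)
Definition tangent_dim (F : fieldType) (A : quad F) (p : 'I_4 -> F) : nat :=
  (4 - \rank (jac A p)).-1.

(* Main.v *)
Require Import Defs.
From HB Require Import structures.
From mathcomp Require Import all_boot all_order all_algebra.
From mathcomp Require Import complex.
From mathcomp Require Import reals.
From mathcomp Require Import mpoly.
From mathcomp Require Import ring zify.
From Stdlib Require Import Classical.
Set Implicit Arguments. Unset Strict Implicit. Unset Printing Implicit Defensive.
Import Order.TTheory GRing.Theory Num.Theory.
Local Open Scope ring_scope.


Section S.
Variable F : fieldType.

Definition pf (X : 'I_5 -> 'I_5 -> F) (a b c d : 'I_5) :=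
  X a b * X c d - X a c * X b d + X a d * X b c.
Definition dpf (M N : 'I_5 -> 'I_5 -> F) (a b c d : 'I_5) :=
  M a b * N c d + N a b * M c d - (M a c * N b d + N a c * M b d)
  + (M a d * N b c + N a d * M b c).
Definition pfv X (i : 'I_5) := pf X (lift i 0) (lift i 1) (lift i 2) (lift i 3).
Definition dpfv M N (i : 'I_5) := dpf M N (lift i 0) (lift i 1) (lift i 2) (lift i 3).

Definition Mat (A : quad F) (v : 'I_4 -> F) : 'M[F]_5 := \sum_k v k *: A k.

Lemma linform_ev (A : quad F) p i j : (linform A i j).@[p] = Mat A p i j.
Proof.
rewrite /linform /Mat raddf_sum summxE; apply: eq_bigr => k _.
by rewrite /= mevalZ mevalXU mxE mulrC.
Qed.

Lemma linform_der (A : quad F) k i j : mderiv k (linform A i j) = (A k i j)%:MP.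
Proof.
rewrite /linform raddf_sum (bigD1 k) //= big1 => [|l lk].
 
  rewrite mderivZ mderivX mnm1E eqxx.
  have e : (U_(k) - U_(k))%MM = 0%MM :> 'X_{1..4} by apply/mnmP => l; rewrite !mnmE subnn.
  by rewrite e mpolyX0 addr0 scale1r -alg_mpolyC.
by rewrite linearZ /= mderivX mnm1E (negbTE lk) scale0r scaler0.
Qed.

Lemma subpf_ev (A : quad F) p i : (subpf A i).@[p] = pfv (Mat A p) i.
Proof. by rewrite /subpf /pf4 /pfv /pf mevalD mevalB !mevalM !linform_ev. Qed.

Lemma jac_ev (A : quad F) p i k : jac A p i k = dpfv (Mat A p) (A k) i.
Proof.
rewrite /jac mxE /subpf /pf4 /dpfv /dpf mderivD mderivB !mderivM !linform_der.
rewrite mevalD mevalB !mevalD !mevalM !mevalC !linform_ev; ring.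
Qed.
End S.


Definition o0 : 'I_5 := @Ordinal 5 0 isT.
Definition o1 : 'I_5 := @Ordinal 5 1 isT.
Definition o2 : 'I_5 := @Ordinal 5 2 isT.
Definition o3 : 'I_5 := @Ordinal 5 3 isT.
Definition o4 : 'I_5 := @Ordinal 5 4 isT.

Lemma ord5 (P : 'I_5 -> Prop) : P o0 -> P o1 -> P o2 -> P o3 -> P o4 -> forall j, P j.
Proof.
move=> H0 H1 H2 H3 H4 [[|[|[|[|[|//]]]]] Hj];
 [ have -> : Ordinal Hj = o0 by apply/val_inj
 | have -> : Ordinal Hj = o1 by apply/val_inj
 | have -> : Ordinal Hj = o2 by apply/val_inj
 | have -> : Ordinal Hj = o3 by apply/val_inj
 | have -> : Ordinal Hj = o4 by apply/val_inj ]; by [].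
Qed.

Lemma sum5 (V : zmodType) (G : 'I_5 -> V) : \sum_(x < 5) G x = G o0 + G o1 + G o2 + G o3 + G o4.
Proof.
rewrite !big_ord_recr big_ord0 /= add0r.
by congr (_ + _ + _ + _ + _); congr G; apply/val_inj.
Qed.

Lemma lift_0_0 : lift o0 (0 : 'I_4) = o1. Proof. by apply/val_inj. Qed.
Lemma lift_0_1 : lift o0 (1 : 'I_4) = o2. Proof. by apply/val_inj. Qed.
Lemma lift_0_2 : lift o0 (2 : 'I_4) = o3. Proof. by apply/val_inj. Qed.
Lemma lift_0_3 : lift o0 (3 : 'I_4) = o4. Proof. by apply/val_inj. Qed.
Lemma lift_1_0 : lift o1 (0 : 'I_4) = o0. Proof. by apply/val_inj. Qed.
Lemma lift_1_1 : lift o1 (1 : 'I_4) = o2. Proof. by apply/val_inj. Qed.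
Lemma lift_1_2 : lift o1 (2 : 'I_4) = o3. Proof. by apply/val_inj. Qed.
Lemma lift_1_3 : lift o1 (3 : 'I_4) = o4. Proof. by apply/val_inj. Qed.
Lemma lift_2_0 : lift o2 (0 : 'I_4) = o0. Proof. by apply/val_inj. Qed.
Lemma lift_2_1 : lift o2 (1 : 'I_4) = o1. Proof. by apply/val_inj. Qed.
Lemma lift_2_2 : lift o2 (2 : 'I_4) = o3. Proof. by apply/val_inj. Qed.
Lemma lift_2_3 : lift o2 (3 : 'I_4) = o4. Proof. by apply/val_inj. Qed.
Lemma lift_3_0 : lift o3 (0 : 'I_4) = o0. Proof. by apply/val_inj. Qed.
Lemma lift_3_1 : lift o3 (1 : 'I_4) = o1. Proof. by apply/val_inj. Qed.
Lemma lift_3_2 : lift o3 (2 : 'I_4) = o2. Proof. by apply/val_inj. Qed.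
Lemma lift_3_3 : lift o3 (3 : 'I_4) = o4. Proof. by apply/val_inj. Qed.
Lemma lift_4_0 : lift o4 (0 : 'I_4) = o0. Proof. by apply/val_inj. Qed.
Lemma lift_4_1 : lift o4 (1 : 'I_4) = o1. Proof. by apply/val_inj. Qed.
Lemma lift_4_2 : lift o4 (2 : 'I_4) = o2. Proof. by apply/val_inj. Qed.
Lemma lift_4_3 : lift o4 (3 : 'I_4) = o3. Proof. by apply/val_inj. Qed.
Definition liftsE := (lift_0_0, lift_0_1, lift_0_2, lift_0_3, lift_1_0, lift_1_1, lift_1_2, lift_1_3, lift_2_0, lift_2_1, lift_2_2, lift_2_3, lift_3_0, lift_3_1, lift_3_2, lift_3_3, lift_4_0, lift_4_1, lift_4_2, lift_4_3).

Section S.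
Variable F : fieldType.
Definition skf (f : nat -> nat -> F) (i j : 'I_5) : F :=
  if (i < j)%N then f i j else if (j < i)%N then - f j i else 0.
Definition Xpf (j : 'I_5) (c : 'I_5 -> F) (X : 'I_5 -> 'I_5 -> F) (u v : 'I_5) :=
  X u v + c u * X j v + c v * X u j.

Lemma dpfv0 (M N : 'I_5 -> 'I_5 -> F) : dpfv M N o0 = dpf M N o1 o2 o3 o4. Proof. by rewrite /dpfv; congr dpf; apply/val_inj. Qed.
Lemma dpfv1 (M N : 'I_5 -> 'I_5 -> F) : dpfv M N o1 = dpf M N o0 o2 o3 o4. Proof. by rewrite /dpfv; congr dpf; apply/val_inj. Qed.
Lemma dpfv2 (M N : 'I_5 -> 'I_5 -> F) : dpfv M N o2 = dpf M N o0 o1 o3 o4. Proof. by rewrite /dpfv; congr dpf; apply/val_inj. Qed.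
Lemma dpfv3 (M N : 'I_5 -> 'I_5 -> F) : dpfv M N o3 = dpf M N o0 o1 o2 o4. Proof. by rewrite /dpfv; congr dpf; apply/val_inj. Qed.
Lemma dpfv4 (M N : 'I_5 -> 'I_5 -> F) : dpfv M N o4 = dpf M N o0 o1 o2 o3. Proof. by rewrite /dpfv; congr dpf; apply/val_inj. Qed.
Lemma pfv0 (M : 'I_5 -> 'I_5 -> F) : pfv M o0 = pf M o1 o2 o3 o4. Proof. by rewrite /pfv; congr pf; apply/val_inj. Qed.
Lemma pfv1 (M : 'I_5 -> 'I_5 -> F) : pfv M o1 = pf M o0 o2 o3 o4. Proof. by rewrite /pfv; congr pf; apply/val_inj. Qed.
Lemma pfv2 (M : 'I_5 -> 'I_5 -> F) : pfv M o2 = pf M o0 o1 o3 o4. Proof. by rewrite /pfv; congr pf; apply/val_inj. Qed.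
Lemma pfv3 (M : 'I_5 -> 'I_5 -> F) : pfv M o3 = pf M o0 o1 o2 o4. Proof. by rewrite /pfv; congr pf; apply/val_inj. Qed.
Lemma pfv4 (M : 'I_5 -> 'I_5 -> F) : pfv M o4 = pf M o0 o1 o2 o3. Proof. by rewrite /pfv; congr pf; apply/val_inj. Qed.
Definition dpfvE := (dpfv0, dpfv1, dpfv2, dpfv3, dpfv4).
Definition pfvE := (pfv0, pfv1, pfv2, pfv3, pfv4).

Lemma dpfv_Xp (j k : 'I_5) (f g : nat -> nat -> F) (d : nat -> F) :
  let c := fun u : 'I_5 => if (j < u)%N then d u else 0 in
  dpfv (Xpf j c (skf f)) (Xpf j c (skf g)) k = dpfv (skf f) (skf g) k +
   (k == j)%:R * \sum_(x < 5) (-1)^+(x+j+1) * c x * dpfv (skf f) (skf g) x.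
Proof.
rewrite /= sum5.
elim/ord5: j; elim/ord5: k.
Time all: rewrite !dpfvE /dpf /Xpf /skf /=.
Time all: ring.
Qed.

Lemma dpf_alt (f g : nat -> nat -> F) (a b x y k : 'I_5) : uniq [:: a; b; x; y; k] ->
  dpfv (skf f) (skf g) k = dpf (skf f) (skf g) a b x y \/
  dpfv (skf f) (skf g) k = - dpf (skf f) (skf g) a b x y.
Proof.
elim/ord5: a; elim/ord5: b; elim/ord5: x; elim/ord5: y; elim/ord5: k.
Time all: move=> /= U; try by [].
Time all: rewrite !dpfvE /dpf /skf /=; first [left; ring | right; ring].
Qed.

Lemma pf_alt (f : nat -> nat -> F) (a b x y k : 'I_5) : uniq [:: a; b; x; y; k] ->
  pfv (skf f) k = pf (skf f) a b x y \/ pfv (skf f) k = - pf (skf f) a b x y.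
Proof.
elim/ord5: a; elim/ord5: b; elim/ord5: x; elim/ord5: y; elim/ord5: k.
all: move=> /= U; try by [].
Time all: rewrite !pfvE /pf /skf /=; first [left; ring | right; ring].
Qed.
End S.


Section M.
Variable F : fieldType.
Implicit Types M N X : 'M[F]_5.

Lemma alt_skew M : alternating M -> forall i j, M j i = - M i j.
Proof. by move=> [_ hT] i j; have := congr1 (fun X => X i j) hT; rewrite !mxE. Qed.
Lemma alt_diag M : alternating M -> forall i, M i i = 0.
Proof. by case. Qed.

Lemma alt_skf M : alternating M -> M =2 skf (fun i j => M (inord i) (inord j)).
Proof.
move=> hM i j; rewrite /skf; case: ltngtP => h; rewrite ?inord_val //.
- by rewrite (alt_skew hM j i).
- have -> : i = j by apply/val_inj.
  by rewrite alt_diag.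
Qed.

Lemma eq_dpf (M M' N N' : 'I_5 -> 'I_5 -> F) a b c d :
  M =2 M' -> N =2 N' -> dpf M N a b c d = dpf M' N' a b c d.
Proof. by move=> hM hN; rewrite /dpf !hM !hN. Qed.
Lemma eq_dpfv (M M' N N' : 'I_5 -> 'I_5 -> F) k :
  M =2 M' -> N =2 N' -> dpfv M N k = dpfv M' N' k.
Proof. by move=> hM hN; apply: eq_dpf. Qed.

Definition Tv (j : 'I_5) (c : 'I_5 -> F) : 'M[F]_5 :=
  \matrix_(u,v) ((u == v)%:R + (v == j)%:R * c u).

Lemma sumT (j : 'I_5) (c : 'I_5 -> F) (u : 'I_5) (G : 'I_5 -> F) : \sum_t Tv j c u t * G t = G u + c u * G j.
Proof.
rewrite (eq_bigr (fun t => (u == t)%:R * G t + (t == j)%:R * (c u * G t))); last first.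
  by move=> t _; rewrite mxE; ring.
rewrite big_split /= (bigD1 u) //= eqxx mul1r big1 ?addr0; last first.
  by move=> t; rewrite eq_sym => /negbTE ->; rewrite mul0r.
by rewrite (bigD1 j) //= eqxx mul1r big1 ?addr0 // => t /negbTE ->; rewrite mul0r.
Qed.

Lemma TXT (j : 'I_5) (c : 'I_5 -> F) X (u v : 'I_5) : (Tv j c *m X *m (Tv j c)^T) u v =
  X u v + c u * X j v + c v * X u j + c u * c v * X j j.
Proof.
rewrite mxE (eq_bigr (fun s => Tv j c v s * (X u s + c u * X j s))); last first.
  by move=> s _; rewrite [in LHS]mxE (sumT j c u (fun t => X t s)) [X in _ * X]mxE mulrC.
rewrite (sumT j c v (fun s => X u s + c u * X j s)). ring.
Qed.

Lemma Tv_lu (j : 'I_5) (c : 'I_5 -> F) : (forall x : 'I_5, (x <= j)%N -> c x = 0) -> unipotent_lower (Tv j c).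
Proof.
move=> hc; split=> [u v uv|u]; rewrite mxE.
  rewrite (_ : (u == v) = false); last by apply/negbTE; rewrite neq_ltn uv.
  case: eqP => [vj|]; last by rewrite mul0r add0r.
  by rewrite hc ?mulr0 ?addr0 // -vj ltnW.
rewrite eqxx; case: eqP => [->|_]; last by rewrite mul0r addr0.
by rewrite hc ?leqnn // mulr0 addr0.
Qed.

Lemma lu_mul n (P Q : 'M[F]_n) : unipotent_lower P -> unipotent_lower Q -> unipotent_lower (P *m Q).
Proof.
move=> [P0 P1] [Q0 Q1]; split=> [u v uv|u]; rewrite mxE.
  apply: big1 => k _; case: (ltnP u k) => h; first by rewrite P0 ?mul0r.
  by rewrite Q0 ?mulr0 // (leq_ltn_trans h uv).
rewrite (bigD1 u) //= P1 Q1 mulr1 big1 ?addr0 // => k ku.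
case: (ltngtP u k) => h; first by rewrite P0 ?mul0r.
  by rewrite Q0 ?mulr0.
by move: ku; rewrite (val_inj h) eqxx.
Qed.

Lemma act_mul (g4 : 'M[F]_4) (h g : 'M[F]_5) (A : quad F) k :
  act g4 (h *m g) A k = h *m act g4 g A k *m h^T.
Proof. by rewrite /act trmx_mul !mulmxA. Qed.

Lemma TXT_alt (j : 'I_5) (c : 'I_5 -> F) X : alternating X -> alternating (Tv j c *m X *m (Tv j c)^T).
Proof.
move=> hX; split=> [u|]; first by rewrite TXT !(alt_diag hX) (alt_skew hX u j); ring.
by rewrite !trmx_mul trmxK (proj2 hX) mulNmx mulmxN mulmxA.
Qed.

Lemma P_Tv (j : 'I_5) (c : 'I_5 -> F) M N : (forall x : 'I_5, (x <= j)%N -> c x = 0) ->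
  alternating M -> alternating N -> (forall k, dpfv M N k = 0) ->
  forall k, dpfv (Tv j c *m M *m (Tv j c)^T) (Tv j c *m N *m (Tv j c)^T) k = 0.
Proof.
move=> hc hM hN H k.
pose d := fun n : nat => c (inord n).
have ec : forall u : 'I_5, c u = (if (j < u)%N then d u else 0).
  by move=> u; case: ltnP => h; [rewrite /d inord_val | rewrite hc].
have E : forall X, alternating X -> (Tv j c *m X *m (Tv j c)^T) =2
    Xpf j (fun u => if (j < u)%N then d u else 0) (skf (fun i j => X (inord i) (inord j))).
  move=> X hX u v; rewrite TXT (alt_diag hX) mulr0 addr0 /Xpf -!ec.
  by rewrite -!(alt_skf hX).
rewrite (eq_dpfv k (E M hM) (E N hN)) dpfv_Xp.
have H' : forall x, dpfv (skf (fun i j => M (inord i) (inord j)))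
                          (skf (fun i j => N (inord i) (inord j))) x = 0.
  by move=> x; rewrite -(eq_dpfv x (alt_skf hM) (alt_skf hN)).
by rewrite H' big1 ?mulr0 ?addr0 // => x _; rewrite H' mulr0.
Qed.
End M.


Lemma fifth (a b x y : 'I_5) : uniq [:: a; b; x; y] -> exists k, uniq [:: a; b; x; y; k].
Proof.
elim/ord5: a; elim/ord5: b; elim/ord5: x; elim/ord5: y.
all: move=> /= U; try by [].
all: first [by exists o0 | by exists o1 | by exists o2 | by exists o3 | by exists o4].
Qed.

Section M.
Variable F : fieldType.
Implicit Types M N X : 'M[F]_5.

Lemma eq_pf (M M' : 'I_5 -> 'I_5 -> F) a b c d :
  M =2 M' -> pf M a b c d = pf M' a b c d.
Proof. by move=> hM; rewrite /pf !hM. Qed.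

Lemma plucker M : alternating M -> (forall k, pfv M k = 0) ->
  forall a b x y : 'I_5, M a b * M x y = M a x * M b y - M a y * M b x.
Proof.
move=> hM H a b x y.
have sk := alt_skew hM; have dg := alt_diag hM.
case: (eqVneq a b) => [<-|ab]; first by rewrite dg; ring.
case: (eqVneq x y) => [<-|xy]; first by rewrite dg; ring.
case: (eqVneq a x) => [<-|ax]; first by rewrite dg (sk a b); ring.
case: (eqVneq a y) => [<-|ay]; first by rewrite dg (sk a b) (sk a x); ring.
case: (eqVneq b x) => [<-|bx]; first by rewrite dg; ring.
case: (eqVneq b y) => [<-|bY]; first by rewrite dg (sk b x); ring.
have U : uniq [:: a; b; x; y] by rewrite /= !inE !negb_or ab ax ay bx bY xy.
case: (fifth U) => k Uk.
have e1 : pfv M k = pfv (skf (fun i j => M (inord i) (inord j))) k.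
  by rewrite /pfv (eq_pf _ _ _ _ (alt_skf hM)).
have e2 : pf M a b x y = pf (skf (fun i j => M (inord i) (inord j))) a b x y.
  by rewrite (eq_pf _ _ _ _ (alt_skf hM)).
have : pf M a b x y = 0.
  case: (pf_alt (fun i j => M (inord i) (inord j)) Uk); rewrite -e1 -e2 H.
    by move=> ->.
  by move/eqP; rewrite eq_sym oppr_eq0 => /eqP.
rewrite /pf => h; apply/eqP; rewrite -subr_eq0; apply/eqP; rewrite -h; ring.
Qed.

Lemma TXT2 (j : 'I_5) (c : 'I_5 -> F) X (s : F) (w u : 'I_5 -> F) :
  (forall x y, X x y = s * (w x * u y - u x * w y)) ->
  forall x y, (Tv j c *m X *m (Tv j c)^T) x y =
    s * ((w x + c x * w j) * (u y + c y * u j) - (u x + c x * u j) * (w y + c y * w j)).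
Proof. by move=> hX x y; rewrite TXT !hX; ring. Qed.

Definition Pdp (g : 'M[F]_5) := forall M N, alternating M -> alternating N ->
  (forall k, dpfv M N k = 0) -> forall k, dpfv (g *m M *m g^T) (g *m N *m g^T) k = 0.

Lemma TT_congr (P Q : 'M[F]_5) X : (P *m Q) *m X *m (P *m Q)^T = P *m (Q *m X *m Q^T) *m P^T.
Proof. by rewrite trmx_mul !mulmxA. Qed.

Lemma Pdp_TT (j1 : 'I_5) c1 (j2 : 'I_5) c2 :
  (forall x : 'I_5, (x <= j1)%N -> c1 x = 0) -> (forall x : 'I_5, (x <= j2)%N -> c2 x = 0) ->
  Pdp (Tv j1 c1 *m Tv j2 c2).
Proof.
move=> h1 h2 M N hM hN H k.
rewrite !TT_congr; apply: P_Tv => //; try apply: TXT_alt => //.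
exact: P_Tv.
Qed.

Lemma structure M : alternating M -> (forall k, pfv M k = 0) -> M != 0 ->
  exists (a b : 'I_5) (g : 'M[F]_5), [/\ (a < b)%N, M a b != 0, unipotent_lower g,
    Pdp g /\ (forall X, alternating X -> alternating (g *m X *m g^T)) &
    forall u v, (g *m M *m g^T) u v =
      M a b * ((u == a)%:R * (v == b)%:R - (u == b)%:R * (v == a)%:R)].
Proof.
move=> hM H M0.
have sk := alt_skew hM; have dg := alt_diag hM.
have [i0 [j0 hij]] : exists i j, M i j != 0.
  case: (pickP (fun p : 'I_5 * 'I_5 => M p.1 p.2 != 0)) => [[i j] /= h|h].
    by exists i, j.
  move/eqP: M0 => M0; exfalso; apply: M0; apply/matrixP => i j; rewrite mxE.
  by have := h (i, j); move/negbFE/eqP.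
have exa : exists n, (n < 5)%N && [exists j, M (inord n) j != 0].
  by exists i0; rewrite ltn_ord /=; apply/existsP; exists j0; rewrite inord_val.
case: (ex_minnP exa) => an /andP[an5 /existsP [j1 hj1]] amin.
pose a : 'I_5 := Ordinal an5.
have ea : inord an = a by apply/val_inj; rewrite /= inordK.
have rowz : forall x : 'I_5, (x < a)%N -> forall y, M x y = 0.
  move=> x xa y; apply/eqP; apply: contraTT xa => hxy; rewrite -leqNgt amin //.
  by rewrite ltn_ord /=; apply/existsP; exists y; rewrite inord_val.
have exb : exists n, (n < 5)%N && (M a (inord n) != 0).
  by exists j1; rewrite ltn_ord inord_val -ea.
case: (ex_minnP exb) => bn /andP[bn5 hb] bmin.
pose b : 'I_5 := Ordinal bn5.
have eb : inord bn = b by apply/val_inj; rewrite /= inordK.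
have wz : forall x : 'I_5, (x < b)%N -> M a x = 0.
  move=> x xb; apply/eqP; apply: contraTT xb => hx; rewrite -leqNgt bmin //.
  by rewrite ltn_ord inord_val.
have Mab : M a b != 0 by rewrite -eb.
have ab : (a < b)%N.
  rewrite ltn_neqAle; apply/andP; split.
    apply/negP => /eqP e; have e' : a = b by apply/val_inj.
    by rewrite e' dg eqxx in Mab.
  rewrite leqNgt; apply/negP => ba; have := rowz b ba a.
  by rewrite sk => /eqP; rewrite oppr_eq0 (negbTE Mab).
have Mba : M b a != 0 by rewrite sk oppr_eq0.
pose w : 'I_5 -> F := fun x => M a x.
pose u : 'I_5 -> F := fun x => M b x.
pose beta := fun x : 'I_5 => if (b < x)%N then - w x / w b else 0.
pose w1 := fun x => w x + beta x * w b.
pose u1 := fun x => u x + beta x * u b.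
pose alpha := fun x : 'I_5 => if (a < x)%N && (x != b) then - u1 x / u1 a else 0.
pose w2 := fun x => w1 x + alpha x * w1 a.
pose u2 := fun x => u1 x + alpha x * u1 a.
have hbeta : forall x : 'I_5, (x <= b)%N -> beta x = 0.
  by move=> x hx; rewrite /beta ltnNge hx.
have halpha : forall x : 'I_5, (x <= a)%N -> alpha x = 0.
  by move=> x hx; rewrite /alpha ltnNge hx.
exists a, b, (Tv a alpha *m Tv b beta); split => //.
- exact: lu_mul (Tv_lu halpha) (Tv_lu hbeta).
- split; first exact: Pdp_TT.
  by move=> X hX; rewrite TT_congr; do 2 apply: TXT_alt.
have rank2 : forall x y, M x y = (M a b)^-1 * (w x * u y - u x * w y).
  move=> x y; apply: (mulfI Mab); rewrite mulrA mulfV // mul1r plucker //.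
  rewrite /w /u; ring.
have hg := TXT2 a alpha (TXT2 b beta rank2).
have u1a : u1 a = M b a by rewrite /u1 hbeta ?mul0r ?addr0 //; exact: ltnW.
have w1E : forall x, w1 x = (x == b)%:R * M a b.
  move=> x; rewrite /w1 /w; case: (ltngtP x b) => h.
  - have xb : (x == b) = false by apply/negbTE; rewrite neq_ltn h.
    have hx : (x <= b)%N by exact: ltnW.
    by rewrite wz // hbeta // mul0r addr0 xb mul0r.
  - have xb : (x == b) = false by apply/negbTE; rewrite neq_ltn h orbT.
    by rewrite /beta /= h xb mul0r /w; field.
  - have -> : x = b := val_inj h.
    by rewrite hbeta // mul0r addr0 eqxx mul1r.
have w2E : forall x, w2 x = (x == b)%:R * M a b.
  move=> x; rewrite /w2 w1E (w1E a) (_ : (a == b) = false) ?mul0r ?mulr0 ?addr0 //.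
  by apply/negbTE; rewrite neq_ltn ab.
have u2E : forall x, u2 x = (x == a)%:R * M b a + (x == b)%:R * u1 b.
  move=> x; rewrite /u2 u1a; case: (ltngtP x a) => h.
  - have xa : (x == a) = false by apply/negbTE; rewrite neq_ltn h.
    have xb : (x == b) = false by apply/negbTE; rewrite neq_ltn (ltn_trans h ab).
    have hx : (x <= a)%N by exact: ltnW.
    have hx' : (x <= b)%N by exact: ltnW (ltn_trans h ab).
    rewrite halpha // mul0r addr0 /u1 /u hbeta // mul0r addr0 xa xb.
    by rewrite sk rowz // oppr0 !mul0r addr0.
  - have xa : (x == a) = false by apply/negbTE; rewrite neq_ltn h orbT.
    rewrite xa mul0r add0r.
    case: (eqVneq x b) => [->|xb].
      by rewrite /alpha /= eqxx andbF mul0r addr0 mul1r.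
    rewrite /alpha /= h xb /= mul0r -u1a; field.
    by rewrite u1a.
  - have -> : x = a := val_inj h.
    have ab' : (a == b) = false by apply/negbTE; rewrite neq_ltn ab.
    by rewrite halpha // mul0r addr0 eqxx mul1r u1a ab' mul0r addr0.
move=> x y; rewrite TT_congr hg.
have E1 : forall z, w z + beta z * w b + alpha z * (w a + beta a * w b) = w2 z by [].
have E2 : forall z, u z + beta z * u b + alpha z * (u a + beta a * u b) = u2 z by [].
by rewrite !E1 !E2 !w2E !u2E (sk a b); field.
Qed.
End M.


Section M.
Variable F : fieldType.
Implicit Types M N X : 'M[F]_5.

Lemma alt_of X : (forall u v, X v u = - X u v) -> (forall u, X u u = 0) -> alternating X.
Proof. by move=> h1 h2; split => //; apply/matrixP => u v; rewrite !mxE h1. Qed.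

Lemma block (M N : 'M[F]_5) (a b : 'I_5) (c : F) : a != b -> c != 0 -> alternating N ->
  (forall u v, M u v = c * ((u == a)%:R * (v == b)%:R - (u == b)%:R * (v == a)%:R)) ->
  (forall k, dpfv M N k = 0) ->
  forall x y : 'I_5, uniq [:: a; b; x; y] -> N x y = 0.
Proof.
move=> ab c0 hN hM H x y U.
have hMa : alternating M.
  apply: alt_of => [u v|u]; rewrite !hM; ring.
case: (fifth U) => k Uk.
have e1 : dpfv M N k = dpfv (skf (fun i j => M (inord i) (inord j)))
                            (skf (fun i j => N (inord i) (inord j))) k.
  exact: eq_dpfv (alt_skf hMa) (alt_skf hN).
have e2 : dpf M N a b x y = dpf (skf (fun i j => M (inord i) (inord j)))
                            (skf (fun i j => N (inord i) (inord j))) a b x y.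
  exact: eq_dpf (alt_skf hMa) (alt_skf hN).
have : dpf M N a b x y = 0.
  case: (dpf_alt (fun i j => M (inord i) (inord j)) (fun i j => N (inord i) (inord j)) Uk);
    rewrite -e1 -e2 H; first by move=> ->.
  by move/eqP; rewrite eq_sym oppr_eq0 => /eqP.
move: U; rewrite /= !inE !negb_or => /and4P[/and3P[ab' ax ay] /andP[bx bY] xy _].
have ba : b != a by rewrite eq_sym.
have xa : x != a by rewrite eq_sym.
have ya : y != a by rewrite eq_sym.
have xb : x != b by rewrite eq_sym.
have yb : y != b by rewrite eq_sym.
have yx : y != x by rewrite eq_sym.
rewrite /dpf !hM !eqxx !(negbTE ab', negbTE ax, negbTE ay, negbTE bx, negbTE bY, negbTE xy,
  negbTE ba, negbTE xa, negbTE ya, negbTE xb, negbTE yb, negbTE yx) => h.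
have : c * N x y = 0 by rewrite -h /=; ring.
by move/eqP; rewrite mulf_eq0 (negbTE c0) => /eqP.
Qed.


Definition hmat (x y z : 'I_5) (r s t : F) : 'M[F]_5 :=
  Tv x (fun u => (u == y)%:R * r + (u == z)%:R * s) *m Tv y (fun u => (u == z)%:R * t).

Lemma hblock (x y z : 'I_5) (r s t : F) X : x != y -> x != z -> y != z -> alternating X ->
  let Z := hmat x y z r s t *m X *m (hmat x y z r s t)^T in
  [/\ Z x y = X x y, Z x z = X x z + t * X x y &
      Z y z = X y z + r * X x z + (r * t - s) * X x y].
Proof.
move=> xy xz yz hX /=.
have yx : y != x by rewrite eq_sym.
have zx : z != x by rewrite eq_sym.
have zy : z != y by rewrite eq_sym.
rewrite /hmat TT_congr !TXT !eqxx !(negbTE xy, negbTE xz, negbTE yz, negbTE yx, negbTE zx, negbTE zy) /=.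
rewrite ?(alt_diag hX) ?(alt_skew hX x y) ?(alt_skew hX x z) ?(alt_skew hX y z).
split; ring.
Qed.

Lemma hmat_alt (x y z : 'I_5) (r s t : F) X : alternating X ->
  alternating (hmat x y z r s t *m X *m (hmat x y z r s t)^T).
Proof. by move=> hX; rewrite /hmat TT_congr; do 2 apply: TXT_alt. Qed.

Lemma hfix (x y z : 'I_5) (r s t : F) X :
  (forall v, [/\ X x v = 0, X v x = 0, X y v = 0 & X v y = 0]) ->
  forall u v, (hmat x y z r s t *m X *m (hmat x y z r s t)^T) u v = X u v.
Proof.
move=> hX u v; rewrite /hmat TT_congr !TXT.
have [h1 h2 h3 h4] := hX v; have [h5 h6 h7 h8] := hX u; have [h9 h10 h11 h12] := hX y.
have [h13 h14 h15 h16] := hX x.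
rewrite !(h1, h2, h3, h4, h5, h6, h7, h8, h9, h10, h11, h12, h13, h14, h15, h16); ring.
Qed.

Lemma hmat_lu (x y z : 'I_5) (r s t : F) : (x < y)%N -> (y < z)%N -> unipotent_lower (hmat x y z r s t).
Proof.
move=> xy yz; apply: lu_mul; apply: Tv_lu => u hu.
  have uy : (u == y) = false by apply/negbTE; rewrite neq_ltn (leq_ltn_trans hu xy).
  have uz : (u == z) = false.
    by apply/negbTE; rewrite neq_ltn (leq_ltn_trans hu (ltn_trans xy yz)).
  by rewrite uy uz !mul0r addr0.
have uz : (u == z) = false by apply/negbTE; rewrite neq_ltn (leq_ltn_trans hu yz).
by rewrite uz mul0r.
Qed.

Lemma Mat_alt (A : quad F) v : (forall k, alternating (A k)) -> alternating (Mat A v).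
Proof.
move=> hA; apply: alt_of => [u w|u]; rewrite /Mat !summxE.
  rewrite -sumrN; apply: eq_bigr => k _; rewrite !mxE (alt_skew (hA k) u w); ring.
by apply: big1 => k _; rewrite mxE (alt_diag (hA k)) mulr0.
Qed.

Lemma Mat_entry (A : quad F) v (g : 'M[F]_5) u w :
  (g *m Mat A v *m g^T) u w = \sum_l v l * (g *m A l *m g^T) u w.
Proof.
rewrite /Mat mulmx_sumr mulmx_suml summxE; apply: eq_bigr => l _.
by rewrite -scalemxAr -scalemxAl mxE.
Qed.

Lemma dpfv_Mat (M : 'M[F]_5) (A : quad F) v k :
  dpfv M (Mat A v) k = \sum_l v l * dpfv M (A l) k.
Proof.
rewrite /Mat (big_morph (fun N : 'M[F]_5 => dpfv M N k) (id1 := 0) (op1 := +%R)); last 2 first.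
- by move=> N1 N2; rewrite /dpfv /dpf !mxE; ring.
- by rewrite /dpfv /dpf !mxE; ring.
by apply: eq_bigr => l _; rewrite /dpfv /dpf !mxE; ring.
Qed.

Lemma lin0 (B : quad F) i j : (forall k, B k i j = 0) -> linform B i j = 0.
Proof. by move=> h; rewrite /linform big1 // => k _; rewrite h scale0r. Qed.

Lemma lin_coef (B : quad F) i j i' j' (a b : F) k :
  a *: linform B i j + b *: linform B i' j' = 0 -> a * B k i j + b * B k i' j' = 0.
Proof.
move/(congr1 (mcoeff U_(k))); rewrite mcoeffD !mcoeffZ /linform !raddf_sum mcoeff0 => <-.
congr (_ * _ + _ * _).
  rewrite /= (bigD1 k) //= big1 ?addr0; first by rewrite mcoeffZ mcoeffXU eqxx mulr1.
  by move=> l lk; rewrite mcoeffZ mcoeffXU (negbTE lk) mulr0.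
rewrite /= (bigD1 k) //= big1 ?addr0; first by rewrite mcoeffZ mcoeffXU eqxx mulr1.
by move=> l lk; rewrite mcoeffZ mcoeffXU (negbTE lk) mulr0.
Qed.
End M.


Section Main.
Variable F : fieldType.

Definition indep (f g : 'I_4 -> F) :=
  forall a b : F, (forall k, a * f k + b * g k = 0) -> a = 0 /\ b = 0.

Definition concl (A : quad F) :=
  exists (g4 : 'M[F]_4) (g5 : 'M[F]_5),
    unipotent_lower g4 /\ unipotent_lower g5 /\
    exists (K : 'I_4) (I J L : 'I_5),
      [/\ I != J, I != L & J != L] /\
      let B := act g4 g5 A in
      (B K = 0 \/
       [/\ forall k, B k != 0,
           forall r, [/\ B K r I = 0, B K r J = 0 & B K r L = 0] &
           (linform B I L = 0 /\ linform B J L = 0) \/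
           (linform B I J = 0 /\
            forall a b : F, a *: linform B I L + b *: linform B J L = 0 ->
                               a = 0 /\ b = 0)]).

Lemma finish (A : quad F) (g4 : 'M[F]_4) (g5 : 'M[F]_5) (K : 'I_4) (I J L : 'I_5) :
  unipotent_lower g4 -> unipotent_lower g5 -> [/\ I != J, I != L & J != L] ->
  (forall r, [/\ act g4 g5 A K r I = 0, act g4 g5 A K r J = 0 & act g4 g5 A K r L = 0]) ->
  ((forall k, act g4 g5 A k I L = 0) /\ (forall k, act g4 g5 A k J L = 0)) \/
  ((forall k, act g4 g5 A k I J = 0) /\
     indep (fun k => act g4 g5 A k I L) (fun k => act g4 g5 A k J L)) ->
  concl A.
Proof.
move=> h4 h5 dist hK hc; exists g4, g5; split=> //; split=> //.
case: (boolP [exists k, act g4 g5 A k == 0]) => [/existsP [k /eqP Bk]|nB].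
  by exists k, I, J, L; split=> //; left.
exists K, I, J, L; split=> //; right; split => //.
  move=> k; apply/negP => /eqP Bk; move/negP: nB; apply; apply/existsP; exists k.
  by apply/eqP.
case: hc => [[h1 h2]|[h1 h2]]; [left | right]; split; try exact: lin0.
by move=> a b hab; apply: h2 => k; exact: lin_coef hab.
Qed.

Lemma indep_ext (f g f' g' : 'I_4 -> F) (cf cg : F) : indep f g -> cf != 0 -> cg != 0 ->
  (forall k, f' k = cf * f k) -> (forall k, g' k = cg * g k) -> indep f' g'.
Proof.
move=> hi cf0 cg0 ef eg a b hab.
have [h1 h2] : a * cf = 0 /\ b * cg = 0.
  by apply: hi => k; rewrite -(hab k) ef eg; ring.
by move/eqP: h1; move/eqP: h2; rewrite !mulf_eq0 (negbTE cf0) (negbTE cg0) !orbF => /eqP -> /eqP ->.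
Qed.

Lemma mx_nz m n (P : 'M[F]_(m, n)) : P != 0 -> exists i j, P i j != 0.
Proof.
move=> P0; case: (pickP (fun p : 'I_m * 'I_n => P p.1 p.2 != 0)) => [[i j] /= h|h].
  by exists i, j.
move/eqP: P0 => P0; exfalso; apply: P0; apply/matrixP => i j; rewrite mxE.
by have := h (i, j); move/negbFE/eqP.
Qed.


Definition oo3 (n : nat) (h : (n < 3)%N) : 'I_3 := Ordinal h.
Lemma sum3 (G : 'I_3 -> F) : \sum_(r < 3) G r =
  G (@Ordinal 3 0 isT) + G (@Ordinal 3 1 isT) + G (@Ordinal 3 2 isT).
Proof.
rewrite !big_ord_recr big_ord0 /= add0r.
by congr (_ + _ + _); congr G; apply/val_inj.
Qed.

Lemma compl3 (a b : 'I_5) : (a < b)%N ->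
  exists x y z : 'I_5, [/\ (x < y)%N, (y < z)%N & uniq [:: a; b; x; y; z]].
Proof.
elim/ord5: b; elim/ord5: a => //= _.
all: first [by exists o0, o1, o2 | by exists o0, o1, o3 | by exists o0, o1, o4
  | by exists o0, o2, o3 | by exists o0, o2, o4 | by exists o0, o3, o4
  | by exists o1, o2, o3 | by exists o1, o2, o4 | by exists o1, o3, o4
  | by exists o2, o3, o4].
Qed.

Lemma not_indep (f g : 'I_4 -> F) : ~ indep f g ->
  exists a b, (forall k, a * f k + b * g k = 0) /\ (a != 0 \/ b != 0).
Proof.
move=> h; apply: NNPP => hn; apply: h => a b hab.
case: (eqVneq a 0) => [a0|a0]; case: (eqVneq b 0) => [b0|b0] //.
- by exfalso; apply: hn; exists a, b; split=> //; right.
- by exfalso; apply: hn; exists a, b; split=> //; left.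
- by exfalso; apply: hn; exists a, b; split=> //; left.
Qed.

Lemma natA (n m : nat) : (4 - m <= 4 - n)%N -> (n <= 4)%N -> (n <= m)%N.
Proof. lia. Qed.
Lemma natB (n : nat) : (n <= 2)%N -> (3 - n == 0)%N = false.
Proof. move=> h; apply/eqP; lia. Qed.

Theorem main (A : quad F) (hA : forall k, alternating (A k)) (p : 'I_4 -> F)
  (hp : on_scheme A p) (htan : (1 <= tangent_dim A p)%N) : concl A.
Proof.
case: hp => [[k0 pk0] hpf].
pose Mp := Mat A p.
have hMp : alternating Mp := Mat_alt p hA.
have pfz : forall k, pfv Mp k = 0 by move=> k; rewrite -subpf_ev hpf.
have exK : exists n, (n < 4)%N && (p (inord n) != 0).
  by exists k0; rewrite ltn_ord inord_val.
have bndK : forall n, (n < 4)%N && (p (inord n) != 0) -> (n <= 3)%N.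
  by move=> n /andP[h _].
case: (ex_maxnP exK bndK) => Kn /andP[Kn4 pKn] Kmax.
pose K : 'I_4 := Ordinal Kn4.
have eK : inord Kn = K by apply/val_inj; rewrite /= inordK.
have pK : p K != 0 by rewrite -eK.
have pz : forall l : 'I_4, (K < l)%N -> p l = 0.
  move=> l Kl; apply/eqP; apply: contraTT Kl => hl; rewrite -leqNgt Kmax //.
  by rewrite ltn_ord inord_val.
pose g4 : 'M[F]_4 := \matrix_(k, l)
  (if k == K then (if (l <= K)%N then p l / p K else 0) else (k == l)%:R).
have g4lu : unipotent_lower g4.
  split=> [k l kl|k]; rewrite mxE.
    case: eqP => [kK|_]; last first.
      by rewrite (_ : (k == l) = false) //; apply/negbTE; rewrite neq_ltn kl.
    by rewrite -kK leqNgt kl.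
  by case: eqP => [->|_]; [rewrite leqnn divff | rewrite eqxx].
have rowK : (\sum_l g4 K l *: A l) = (p K)^-1 *: Mp.
  rewrite /Mp /Mat scaler_sumr; apply: eq_bigr => l _; rewrite mxE eqxx scalerA.
  case: leqP => h; first by rewrite mulrC.
  by rewrite (pz l h) mulr0 !scale0r.
have actK : forall g5, act g4 g5 A K = (p K)^-1 *: (g5 *m Mp *m g5^T).
  by move=> g5; rewrite /act rowK -scalemxAr -scalemxAl.
case: (eqVneq Mp 0) => [Mp0|Mp0].
  exists g4, 1%:M; split=> //; split.
    split=> [u v uv|u]; rewrite mxE; last by rewrite eqxx.
    by rewrite (_ : (u == v) = false) //; apply/negbTE; rewrite neq_ltn uv.
  exists K, o0, o1, o2; split=> //; left.
  by rewrite /= actK Mp0 mulmx0 mul0mx scaler0.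
have [a [b [g [ab Mab glu [gP galt] gE]]]] := structure hMp pfz Mp0.
have abn : a != b by rewrite neq_ltn ab.
have [x [y [z [xy yz U]]]] := compl3 ab.
move: (U); rewrite /= !inE !negb_or.
move=> /and5P[/and4P[ab1 ax ay az] /and3P[bx bY bz] /andP[xy' xz'] yz' _].
have Uxy : uniq [:: a; b; x; y] by rewrite /= !inE !negb_or ab1 ax ay bx bY xy'.
have Uxz : uniq [:: a; b; x; z] by rewrite /= !inE !negb_or ab1 ax az bx bz xz'.
have Uyz : uniq [:: a; b; y; z] by rewrite /= !inE !negb_or ab1 ay az bY bz yz'.
have B0alt : forall k, alternating (act g4 g A k).
  by move=> k; exact: (galt _ (Mat_alt (fun l => g4 k l) hA)).
have key : forall v : 'I_4 -> F, (forall s, \sum_k jac A p s k * v k = 0) ->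
    forall u w, uniq [:: a; b; u; w] -> (g *m Mat A v *m g^T) u w = 0.
  move=> v hv u w Uuw.
  have H1 : forall s, dpfv Mp (Mat A v) s = 0.
    move=> s; rewrite dpfv_Mat; apply: etrans _ (hv s); apply: eq_bigr => l _.
    by rewrite jac_ev mulrC.
  have H2 := gP _ _ hMp (Mat_alt v hA) H1.
  exact: (block abn Mab (galt _ (Mat_alt v hA)) gE H2 Uuw).
have Jrk : (\rank (jac A p) <= 2)%N.
  by move: htan; rewrite /tangent_dim; case: (\rank (jac A p)) => [|[|[|[|n]]]].
pose pr1 (r : 'I_3) : 'I_5 := nth x [:: x; x; y] r.
pose pr2 (r : 'I_3) : 'I_5 := nth x [:: y; z; z] r.
have Upr : forall r, uniq [:: a; b; pr1 r; pr2 r].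
  by move=> [[|[|[|//]]] hr]; rewrite /pr1 /pr2 /=.
pose Psi : 'M[F]_(3,4) := \matrix_(r, l) (g *m A l *m g^T) (pr1 r) (pr2 r).
have PsiJ : (\rank Psi <= \rank (jac A p))%N.
  have sub : (kermx (jac A p)^T <= kermx Psi^T)%MS.
    apply/sub_kermxP; apply/matrixP => i r; rewrite [LHS]mxE [RHS]mxE.
    have hv : forall s, \sum_k jac A p s k * kermx (jac A p)^T i k = 0.
      move=> s; have := congr1 (fun P : 'M[F]_(4,5) => P i s) (mulmx_ker (jac A p)^T).
      rewrite [LHS]mxE [RHS]mxE => h; apply: etrans _ h; apply: eq_bigr => k _.
      by rewrite [(jac A p)^T k s]mxE mulrC.
    have := key _ hv (pr1 r) (pr2 r) (Upr r); rewrite Mat_entry => h.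
    apply: etrans _ h; apply: eq_bigr => l _.
    by rewrite [Psi^T l r]mxE [Psi r l]mxE mulrC.
  have := mxrankS sub; rewrite !mxrank_ker !mxrank_tr.
  by move=> h; apply: natA h (rank_leq_col Psi).
have actE : forall k u w, act g4 g A k u w = \sum_l g4 k l * (g *m A l *m g^T) u w.
  by move=> k; exact: (Mat_entry A (fun l => g4 k l) g).
pose Phi := Psi *m g4^T.
have PhiE : forall r k, Phi r k = act g4 g A k (pr1 r) (pr2 r).
  move=> r k; rewrite actE [Phi r k]mxE; apply: eq_bigr => l _.
  by rewrite [g4^T l k]mxE [Psi r l]mxE mulrC.
have Phirk : (\rank Phi <= 2)%N.
  exact: leq_trans (mxrankM_maxl Psi g4^T) (leq_trans PsiJ Jrk).
have kPhi : kermx Phi != 0.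
  by rewrite -mxrank_eq0 mxrank_ker natB.
have [i0 [j0 hij]] := mx_nz kPhi.
pose lam r := kermx Phi i0 r.
pose f1 k := act g4 g A k x y.
pose f2 k := act g4 g A k x z.
pose f3 k := act g4 g A k y z.
have hlam : forall k, lam (@Ordinal 3 0 isT) * f1 k + lam (@Ordinal 3 1 isT) * f2 k
                      + lam (@Ordinal 3 2 isT) * f3 k = 0.
  move=> k; have := congr1 (fun P : 'M[F]_(3,4) => P i0 k) (mulmx_ker Phi).
  by rewrite [LHS]mxE [RHS]mxE sum3 !PhiE.
set l0 := lam (@Ordinal 3 0 isT) in hlam.
set l1 := lam (@Ordinal 3 1 isT) in hlam.
set l2 := lam (@Ordinal 3 2 isT) in hlam.
have lamnz : ~ [/\ l0 = 0, l1 = 0 & l2 = 0].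
  case=> h0 h1 h2; move: hij; rewrite -/(lam j0).
  case: j0 => [[|[|[|//]]] hj].
  - have -> : Ordinal hj = @Ordinal 3 0 isT by apply/val_inj.
    by change (l0 != 0 -> False); rewrite h0 eqxx.
  - have -> : Ordinal hj = @Ordinal 3 1 isT by apply/val_inj.
    by change (l1 != 0 -> False); rewrite h1 eqxx.
  - have -> : Ordinal hj = @Ordinal 3 2 isT by apply/val_inj.
    by change (l2 != 0 -> False); rewrite h2 eqxx.
have X0 : forall w, (w == a) = false -> (w == b) = false -> forall u,
    act g4 g A K w u = 0 /\ act g4 g A K u w = 0.
  have scE : forall (c : F) (P : 'M[F]_5) i j, (c *: P) i j = c * P i j.
    by move=> c P i j; rewrite mxE.
  by move=> w wa wb u; rewrite !actK !scE !gE wa wb /=; split; ring.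
have xa : (x == a) = false by apply/negbTE; rewrite eq_sym.
have xb : (x == b) = false by apply/negbTE; rewrite eq_sym.
have ya : (y == a) = false by apply/negbTE; rewrite eq_sym.
have yb : (y == b) = false by apply/negbTE; rewrite eq_sym.
have za : (z == a) = false by apply/negbTE; rewrite eq_sym.
have zb : (z == b) = false by apply/negbTE; rewrite eq_sym.
have fin : forall r s t (I J L : 'I_5), [/\ I != J, I != L & J != L] ->
    I \in [:: x; y; z] -> J \in [:: x; y; z] -> L \in [:: x; y; z] ->
    ((forall k, act g4 (hmat x y z r s t *m g) A k I L = 0) /\
     (forall k, act g4 (hmat x y z r s t *m g) A k J L = 0)) \/
    ((forall k, act g4 (hmat x y z r s t *m g) A k I J = 0) /\
     indep (fun k => act g4 (hmat x y z r s t *m g) A k I L)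
           (fun k => act g4 (hmat x y z r s t *m g) A k J L)) -> concl A.
  move=> r s t I J L dist hI hJ hL hc.
  apply: (finish (A := A) (g4 := g4) (g5 := hmat x y z r s t *m g) (K := K) (I := I) (J := J) (L := L)) => //.
    exact: lu_mul (hmat_lu r s t xy yz) glu.
  have hfx : forall v, [/\ act g4 g A K x v = 0, act g4 g A K v x = 0,
                          act g4 g A K y v = 0 & act g4 g A K v y = 0].
    by move=> v; have [h1 h2] := X0 x xa xb v; have [h3 h4] := X0 y ya yb v.
  have col0 : forall w, w \in [:: x; y; z] -> forall u,
      act g4 (hmat x y z r s t *m g) A K u w = 0.
    move=> w hw u; rewrite act_mul (hfix z r s t hfx).
    move: hw; rewrite !inE => /or3P [] /eqP ->.
    - by case: (X0 x xa xb u).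
    - by case: (X0 y ya yb u).
    - by case: (X0 z za zb u).
  by move=> u; split; apply: col0.
have Bent : forall r s t k,
  [/\ act g4 (hmat x y z r s t *m g) A k x y = f1 k,
      act g4 (hmat x y z r s t *m g) A k x z = f2 k + t * f1 k &
      act g4 (hmat x y z r s t *m g) A k y z = f3 k + r * f2 k + (r * t - s) * f1 k].
  by move=> r s t k; rewrite !act_mul; exact: (hblock r s t xy' xz' yz' (B0alt k)).
have Bsk : forall r s t k u w,
    act g4 (hmat x y z r s t *m g) A k w u = - act g4 (hmat x y z r s t *m g) A k u w.
  by move=> r s t k u w; rewrite act_mul; apply: alt_skew; apply: hmat_alt.
have yx' : y != x by rewrite eq_sym.
have zx' : z != x by rewrite eq_sym.
have zy' : z != y by rewrite eq_sym.
have inx : x \in [:: x; y; z] by rewrite !inE eqxx.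
have iny : y \in [:: x; y; z] by rewrite !inE eqxx orbT.
have inz : z \in [:: x; y; z] by rewrite !inE eqxx !orbT.
case: (boolP [forall k, f1 k == 0]) => [/forallP hf1|/forallPn [k1 hk1]].
  have hf1' : forall k, f1 k = 0 by move=> k; apply/eqP.
  case: (classic (indep f2 f3)) => [hi|/not_indep [al [be [hab nz]]]].
    apply: (fin 0 0 0 x y z) => //; right; split.
      by move=> k; case: (Bent 0 0 0 k) => -> _ _.
    apply: (indep_ext (cf := 1) (cg := 1) hi (oner_neq0 _) (oner_neq0 _)) => k.
      by case: (Bent 0 0 0 k) => _ -> _; rewrite hf1'; ring.
    by case: (Bent 0 0 0 k) => _ _ ->; rewrite hf1'; ring.
  case: (boolP [forall k, f2 k == 0]) => [/forallP hf2|/forallPn [k2 hk2]].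
    apply: (fin 0 0 0 y z x) => //; left; split => k.
      by rewrite Bsk; case: (Bent 0 0 0 k) => -> _ _; rewrite hf1' oppr0.
    by rewrite Bsk; case: (Bent 0 0 0 k) => _ -> _; rewrite hf1' (eqP (hf2 k)); ring.
  have be0 : be != 0.
    apply/negP => /eqP be0; have al0 : al != 0 by case: nz => //; rewrite be0 eqxx.
    have := hab k2; rewrite be0 mul0r addr0 => /eqP; rewrite mulf_eq0 (negbTE al0).
    by rewrite (negbTE hk2).
  apply: (fin (al / be) 0 0 x z y) => //; left; split => k.
    by case: (Bent (al / be) 0 0 k) => -> _ _.
  rewrite Bsk; case: (Bent (al / be) 0 0 k) => _ _ ->; rewrite hf1'.
  apply/eqP; rewrite oppr_eq0; apply/eqP; apply: (mulIf be0); rewrite mul0r.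
  by apply: etrans _ (hab k); field.
case: (classic (indep f1 f2)) => [hi|/not_indep [al [be [hab nz]]]].
  have l20 : l2 != 0.
    apply/negP => /eqP l20; apply: lamnz.
    have [] := hi l0 l1; last by move=> -> ->.
    by move=> k; rewrite -(hlam k) l20; ring.
  apply: (fin (l1 / l2) (- (l0 / l2)) 0 y z x) => //; right; split.
    move=> k; case: (Bent (l1 / l2) (- (l0 / l2)) 0 k) => _ _ ->.
    by apply: (mulIf l20); rewrite [RHS]mul0r; apply: etrans _ (hlam k); field.
  have m1 : (-1 : F) != 0 by rewrite oppr_eq0 oner_eq0.
  apply: (indep_ext (cf := -1) (cg := -1) hi m1 m1) => k.
    by rewrite Bsk; case: (Bent (l1 / l2) (- (l0 / l2)) 0 k) => -> _ _; ring.
  by rewrite Bsk; case: (Bent (l1 / l2) (- (l0 / l2)) 0 k) => _ -> _; ring.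
have be0 : be != 0.
  apply/negP => /eqP be0; have al0 : al != 0 by case: nz => //; rewrite be0 eqxx.
  have := hab k1; rewrite be0 mul0r addr0 => /eqP; rewrite mulf_eq0 (negbTE al0).
  by rewrite (negbTE hk1).
have hxz : forall r s k, act g4 (hmat x y z r s (al / be) *m g) A k x z = 0.
  move=> r s k; case: (Bent r s (al / be) k) => _ -> _.
  by apply: (mulIf be0); rewrite [RHS]mul0r; apply: etrans _ (hab k); field.
case: (classic (indep f1 f3)) => [hi|/not_indep [ga [de [hgd nz']]]].
  apply: (fin 0 0 (al / be) x z y) => //; right; split => //.
  have m1 : (-1 : F) != 0 by rewrite oppr_eq0 oner_eq0.
  apply: (indep_ext (cf := 1) (cg := -1) hi (oner_neq0 _) m1) => k.
    by case: (Bent 0 0 (al / be) k) => -> _ _; ring.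
  by rewrite Bsk; case: (Bent 0 0 (al / be) k) => _ _ ->; ring.
have de0 : de != 0.
  apply/negP => /eqP de0; have ga0 : ga != 0 by case: nz' => //; rewrite de0 eqxx.
  have := hgd k1; rewrite de0 mul0r addr0 => /eqP; rewrite mulf_eq0 (negbTE ga0).
  by rewrite (negbTE hk1).
apply: (fin 0 (- (ga / de)) (al / be) x y z) => //; left; split => // k.
case: (Bent 0 (- (ga / de)) (al / be) k) => _ _ ->.
apply: (mulIf de0); rewrite [RHS]mul0r; apply: etrans _ (hgd k); field.
by rewrite de0 be0.
Qed.
End Main.
Local Open Scope complex_scope.

Theorem lemma4p5 (R : realType) (A : quad R[i])
  (hA : forall k, alternating (A k))
  (p : 'I_4 -> R[i]) (hp : on_scheme A p) (htan : (1 <= tangent_dim A p)%N) :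
  exists (g4 : 'M[R[i]]_4) (g5 : 'M[R[i]]_5),
    unipotent_lower g4 /\ unipotent_lower g5 /\
    exists (K : 'I_4) (I J L : 'I_5),
      [/\ I != J, I != L & J != L] /\
      let B := act g4 g5 A in
      (B K = 0 \/
       [/\ forall k, B k != 0,
           forall r, [/\ B K r I = 0, B K r J = 0 & B K r L = 0] &
           (linform B I L = 0 /\ linform B J L = 0) \/
           (linform B I J = 0 /\
            forall a b : R[i], a *: linform B I L + b *: linform B J L = 0 ->
                               a = 0 /\ b = 0)]).
Proof. exact: (main hA hp htan). Qed.
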